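(* Let $S$ be a triangulated surface with set of simplices $\mathcal V=\mathcal V_0\cup\mathcal V_1\cup\mathcal V_2$, and let $V:\mathcal V_0\to\mathcal N$ be any map. Then there is a unique simplicial surface tonnetz $T$ on $S$ which is a vertex tonnetz satisfying $[T(\rho)]=\{V(\rho)\}$ for every vertex $\rho\in\mathcal V_0$ and, for every face $\sigma\in\mathcal V_2$, $T(\sigma)$ equals the multiset $\{V(\rho)\mid \rho\in\mathcal V_0,\ \rho<\sigma\}$ (the values of $V$ on the three vertices of $\sigma$, counted with multiplicity).
   Context: Let $\mathcal N=\mathbb Z/12\mathbb Z$ (pitch classes). A multiset in $\mathcal N$ is a finite collection of elements of $\mathcal N$ with (finite) multiplicities; $\operatorname{Multisets}(\mathcal N)$ denotes the set of all of them. For a multiset $\mathcal C$, $|\mathcal C|$ is its order (number of elements counted with multiplicity) and $[\mathcal C]$ its underlying set. For a set $\mathcal A$ and multiset $\mathcal C$, a bijection $\phi:\mathcal A\to\mathcal C$ means a map $\phi:\mathcal A\to[\mathcal C]$ such that for each $c\in[\mathcal C]$ the cardinality of $\phi^{-1}(c)$ equals the multiplicity of $c$ in $\mathcal C$. Let $S$ be a surface (2-dimensional topological manifold, without boundary) with a triangulation whose sets of vertices, edges and faces are $\mathcal V_0,\mathcal V_1,\mathcal V_2$; $\mathcal V=\mathcal V_0\cup\mathcal V_1\cup\mathcal V_2$ is partially ordered by inclusion ($\le$, $<$), and $\tau\prec\sigma$ means $\tau\le\sigma$ with $\tau$ of codimension 1 in $\sigma$. Every edge has two vertices and lies in exactly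 two faces. A simplicial surface tonnetz on $S$ is a map $T:\mathcal V\to\operatorname{Multisets}(\mathcal N)$ such that: (1) (downwards coherent) for each $\sigma\in\mathcal V_1\cup\mathcal V_2$ there exists a bijection $\partial_\sigma:\{\tau\mid\tau\prec\sigma\}\to T(\sigma)$ such that $\partial_\sigma(\tau)=N$ implies $N\in T(\tau)$; (2) (upwards coherent) for each $\rho\in\mathcal V_0\cup\mathcal V_1$ there exists a bijection $\Delta_\rho:\{\tau\mid\tau\succ\rho\}\to T(\rho)$ such that $\Delta_\rho(\tau)=N$ implies $N\in T(\tau)$. (The bijections are not part of the data; only their existence is required.) A tonnetz $T$ is a vertex tonnetz if $[T(\rho)]$ has cardinality one for every vertex $\rho\in\mathcal V_0$. *)

(* Defs.v *)
From HB Require Import structures.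
From mathcomp Require Import all_boot all_algebra.
From mathcomp Require Import finmap.
Set Implicit Arguments. Unset Strict Implicit. Unset Printing Implicit Defensive.
Local Open Scope fset_scope.

(* Pitch classes N = Z/12Z. *)
Definition pitch := 'Z_12.

(* Multisets in N: multiplicity functions (automatically finite). *)
Definition mset12 := {ffun pitch -> nat}.
Definition morder (C : mset12) : nat := \sum_(c : pitch) C c.
Definition underlying (C : mset12) : {set pitch} := [set c | 0 < C c]%N.

Definition has_card (T : eqType) (P : T -> Prop) (n : nat) : Prop :=
  exists s : seq T, [/\ uniq s, size s = n & forall x, x \in s <-> P x].

(* A triangulated surface (without boundary), as a 2-dimensional abstract
   simplicial complex on the vertex type V, given by its set of faces
   (triangles), whose vertex links are all circles (combinatorial surface). *)
Record tri_surface (V : choiceType) := TriSurface {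
  face : {fset V} -> Prop;
  face_card : forall f, face f -> #|` f| = 3;
  vertex_in_face : forall v : V, exists f, face f /\ v \in f;
  edge_two_faces : forall e : {fset V}, #|` e| = 2 ->
     (exists f, face f /\ e `<=` f) -> has_card (fun f => face f /\ e `<=` f) 2;
  vertex_link_cycle : forall v : V, exists s : seq V,
     [/\ uniq s, (3 <= size s)%N,
         (forall u, u \in s <-> exists f, [/\ face f, v \in f, u \in f & u != v])
       & (forall a b, a \in s -> b \in s ->
            (face [fset v; a; b] <-> (next s a = b \/ next s b = a)))]
}.

Section Tonnetz.
Variables (V : choiceType) (S : tri_surface V).

Definition is_simplex (s : {fset V}) : Prop :=
  s != fset0 /\ exists f, face S f /\ s `<=` f.

Definition prec (t s : {fset V}) : Prop :=
  [/\ is_simplex t, is_simplex s, t `<=` s & #|` s| = (#|` t|).+1].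

Definition bij_onto (A : {fset V} -> Prop) (C : mset12) (phi : {fset V} -> pitch)
  : Prop := forall c, has_card (fun t => A t /\ phi t = c) (C c).

Definition downwards_coherent (T : {fset V} -> mset12) : Prop :=
  forall s, is_simplex s -> (2 <= #|` s|)%N ->
    exists phi, bij_onto (fun t => prec t s) (T s) phi /\
                forall t, prec t s -> (0 < T t (phi t))%N.

Definition upwards_coherent (T : {fset V} -> mset12) : Prop :=
  forall r, is_simplex r -> (#|` r| <= 2)%N ->
    exists phi, bij_onto (fun t => prec r t) (T r) phi /\
                forall t, prec r t -> (0 < T t (phi t))%N.

(* simplicial surface tonnetz (only the values on simplices matter) *)
Definition is_tonnetz (T : {fset V} -> mset12) : Prop :=
  downwards_coherent T /\ upwards_coherent T.

(* vertices of S are the singletons [fset v], v : V *)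
Definition vertex_tonnetz (T : {fset V} -> mset12) : Prop :=
  forall v : V, #|underlying (T [fset v])| = 1%N.

Definition vertex_generated (Vm : V -> pitch) (T : {fset V} -> mset12) : Prop :=
  [/\ is_tonnetz T, vertex_tonnetz T,
      (forall v : V, underlying (T [fset v]) = [set Vm v])
    & (forall f, face S f -> forall c : pitch,
         T f c = (\sum_(v <- f) (Vm v == c))%N)].

End Tonnetz.

(* Main.v *)
Require Import Defs.
From HB Require Import structures.
From mathcomp Require Import all_boot all_algebra.
From mathcomp Require Import finmap zify.
From Stdlib Require Import IndefiniteDescription.
Set Implicit Arguments. Unset Strict Implicit. Unset Printing Implicit Defensive.
Local Open Scope fset_scope.

Lemma has_card_uniq (T : eqType) (P : T -> Prop) n m :
  has_card P n -> has_card P m -> n = m.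
Proof.
move=> [s [us <- ms]] [t [ut <- mt]].
apply: perm_size; apply: uniq_perm => // x.
by apply/idP/idP => [/ms/mt|/mt/ms].
Qed.

Lemma has_card_filter (T U : eqType) (P : T -> Prop) (l : seq T) (phi : T -> U) c :
  uniq l -> (forall t, t \in l <-> P t) ->
  has_card (fun t => P t /\ phi t = c) (count (fun t => phi t == c) l).
Proof.
move=> ul hl; exists (filter (fun t => phi t == c) l); split.
- exact: filter_uniq.
- by rewrite size_filter.
- move=> x; rewrite mem_filter; split.
  + by move/andP => [/eqP e /hl].
  + by move=> [/hl -> /eqP ->].
Qed.

Lemma has_card_pos (T : eqType) (P : T -> Prop) n x : has_card P n -> P x -> (0 < n)%N.
Proof. by move=> [s [_ <- ms]] /ms; case: s {ms}. Qed.

Section S.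
Variables (V : choiceType) (S : tri_surface V) (Vm : V -> pitch).

Lemma simplex_card s : is_simplex S s -> (0 < #|`s| <= 3)%N.
Proof.
case=> ne [f [hf sf]]; rewrite cardfs_gt0 ne /= -(face_card hf).
exact: fsubset_leq_card.
Qed.

Lemma sub_simplex s t : is_simplex S s -> t `<=` s -> t != fset0 -> is_simplex S t.
Proof.
move=> [_ [f [hf sf]]] ts nt; split => //; exists f; split=> //.
exact: fsubset_trans ts sf.
Qed.

Lemma simplex3_face s : is_simplex S s -> #|`s| = 3 -> face S s.
Proof.
move=> [_ [f [hf sf]]] c.
have: s == f by rewrite eqEfcard sf (face_card hf) c.
by move/eqP->.
Qed.

Lemma face_simplex f : face S f -> is_simplex S f.
Proof.
move=> hf; split; last by exists f; split.
by rewrite -cardfs_gt0 (face_card hf).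
Qed.

Lemma sub_compl (t s : {fset V}) : t `<=` s -> #|`s| = (#|`t|).+1 ->
  exists2 z, z \in s & t = s `\ z.
Proof.
move=> ts cs.
have : ~~ (s `<=` t).
  by apply/negP => st; have := fsubset_leq_card st; rewrite cs ltnn.
case/fsubsetPn => z zs zt; exists z => //.
apply/eqP; rewrite eqEfcard; apply/andP; split.
- apply/fsubsetP => x xt; rewrite in_fsetD1 (fsubsetP ts _ xt) andbT.
  by apply/eqP => e; rewrite -e xt in zt.
- by move: (cardfsD1 z s); rewrite zs cs add1n => -[->].
Qed.

Lemma prec_inv t s : prec S t s -> exists2 z, z \in s & t = s `\ z.
Proof. by case=> _ _ ts cs; apply: sub_compl. Qed.

Lemma prec_compl s z : is_simplex S s -> (2 <= #|`s|)%N -> z \in s -> prec S (s `\ z) s.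
Proof.
move=> hs c2 zs.
have cz : #|`s| = (#|`s `\ z|).+1 by rewrite (cardfsD1 z s) zs.
split => //; last exact: fsubD1set.
apply: sub_simplex hs (fsubD1set _ _) _.
by rewrite -cardfs_gt0; move: c2; rewrite cz.
Qed.

Lemma card2E (s : {fset V}) : #|`s| = 2 -> exists u w, u != w /\ s = [fset u; w].
Proof.
move=> c.
have : s != fset0 by rewrite -cardfs_gt0 c.
case/fset0Pn => u us.
have c1 : #|` s `\ u| == 1.
  by move: (cardfsD1 u s); rewrite us c add1n => -[<-].
case/cardfs1P: c1 => w e.
exists u, w; split.
- have : w \in s `\ u by rewrite e fset11.
  by rewrite in_fsetD1 eq_sym => /andP[].
- by rewrite -e fsetD1K.
Qed.

Lemma card3E (s : {fset V}) : #|`s| = 3 -> exists a b c,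
  [/\ a \notin [fset b; c], b != c & s = a |` [fset b; c]].
Proof.
move=> c.
have : s != fset0 by rewrite -cardfs_gt0 c.
case/fset0Pn => a sa.
have c2 : #|` s `\ a| = 2.
  by move: (cardfsD1 a s); rewrite sa c add1n => -[<-].
case: (card2E c2) => b [d [bd e]].
exists a, b, d; split => //.
- by rewrite -e fsetD11.
- by rewrite -e fsetD1K.
Qed.

Lemma edgeD (u w : V) : u != w -> [fset u; w] `\ w = [fset u] /\ [fset u; w] `\ u = [fset w].
Proof.
move=> uw; split; apply/fsetP => x; rewrite !inE;
  by case: (eqVneq x u) => [xu|xu]; case: (eqVneq x w) => [xw|xw] //=;
     move: uw; rewrite -?xu -?xw ?eqxx.
Qed.


Definition Lv (v : V) : seq V :=
  proj1_sig (constructive_indefinite_description _ (vertex_link_cycle S v)).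

Lemma LvP v : [/\ uniq (Lv v), (3 <= size (Lv v))%N &
   (forall u, u \in Lv v <-> exists f, [/\ face S f, v \in f, u \in f & u != v])].
Proof.
rewrite /Lv; case: constructive_indefinite_description => s [? ? ? _] /=.
by split.
Qed.

Definition Tdef (s : {fset V}) : mset12 :=
  [ffun c => if #|`s| == 1 then (\sum_(v <- s) (Vm v == c) * size (Lv v))%N
             else (\sum_(v <- s) (Vm v == c))%N].

Lemma Tvert v c : Tdef [fset v] c = ((Vm v == c) * size (Lv v))%N.
Proof. by rewrite ffunE cardfs1 eqxx big_seq_fset1. Qed.

Lemma Tnv s c : #|`s| != 1 -> Tdef s c = (\sum_(v <- s) (Vm v == c))%N.
Proof. by rewrite ffunE => /negbTE ->. Qed.

Lemma sum_pos (s : {fset V}) y : y \in s -> (0 < \sum_(v <- s) (Vm v == Vm y))%N.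
Proof. by move=> ys; rewrite (big_fsetD1 y) //= eqxx. Qed.

Lemma sum2 u w c : u != w ->
  (\sum_(v <- [fset u; w]) (Vm v == c) = (Vm u == c) + (Vm w == c))%N.
Proof.
by move=> uw; rewrite big_fsetU1 ?inE // big_seq_fset1.
Qed.

Lemma sum3 a b d c : a \notin [fset b; d] -> b != d ->
  (\sum_(v <- a |` [fset b; d]) (Vm v == c) = (Vm a == c) + ((Vm b == c) + (Vm d == c)))%N.
Proof. by move=> a1 bd; rewrite big_fsetU1 // sum2. Qed.

Definition edges v := [seq [fset v; u] | u <- Lv v].

Lemma edgesP v : uniq (edges v) /\ (forall t, t \in edges v <-> prec S [fset v] t).
Proof.
have [uL _ mL] := LvP v.
split.
- rewrite map_inj_in_uniq // => u1 u2 h1 h2 e.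
  have : u1 \in [fset v; u2] by rewrite -e !inE eqxx orbT.
  case/mL: h1 => f [_ _ _ u1v].
  by rewrite !inE (negbTE u1v) /= => /eqP.
- move=> t; split.
  + case/mapP => u /[dup] uL' /mL [f [hf vf uf uv]] ->.
    have sf : [fset v; u] `<=` f.
      by apply/fsubsetP => x; rewrite !inE => /orP[]/eqP->.
    split.
    * split; first by rewrite -cardfs_gt0 cardfs1.
      exists f; split => //; by rewrite fsub1set.
    * split; first by rewrite -cardfs_gt0 cardfs2.
      by exists f.
    * by rewrite fsub1set !inE eqxx.
    * by rewrite cardfs1 cardfs2 eq_sym uv.
  + case=> _ [ne [f [hf tf]]] vt ct.
    rewrite fsub1set in vt; rewrite cardfs1 in ct.
    have : #|` t `\ v| == 1 by move: (cardfsD1 v t); rewrite vt ct add1n => -[<-].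
    case/cardfs1P => u e.
    have : u \in t `\ v by rewrite e fset11.
    rewrite in_fsetD1 => /andP [uv ut].
    have -> : t = [fset v; u] by rewrite -(fsetD1K vt) e.
    apply/mapP; exists u => //; apply/mL; exists f.
    by split => //; apply: (fsubsetP tf).
Qed.


Lemma Dneq (s : {fset V}) x y : x \in s -> y \in s -> x != y -> s `\ x != s `\ y.
Proof.
move=> xs ys xy; apply/eqP => e.
have : y \in s `\ x by rewrite in_fsetD1 eq_sym xy ys.
by rewrite e in_fsetD1 eqxx.
Qed.

Lemma edge_l (u w : V) : u != w -> is_simplex S [fset u; w] ->
  forall t, t \in [:: [fset u]; [fset w]] <-> prec S t [fset u; w].
Proof.
move=> uw hs t; have [Du Dw] := edgeD uw.
have c2 : (2 <= #|` [fset u; w]|)%N by rewrite cardfs2 uw.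
split.
- rewrite !inE => /orP[]/eqP ->.
  + have := @prec_compl [fset u; w] w hs c2; rewrite Du; apply.
    by rewrite !inE eqxx orbT.
  + have := @prec_compl [fset u; w] u hs c2; rewrite Dw; apply.
    by rewrite !inE eqxx.
- case/prec_inv => z; rewrite !inE => /orP[]/eqP -> ->.
  + by rewrite Dw eqxx orbT.
  + by rewrite Du eqxx.
Qed.

Lemma Tdown : downwards_coherent S Tdef.
Proof.
move=> s hs c2.
have /andP[_ c3] := simplex_card hs.
have : #|`s| = 2 \/ #|`s| = 3 by lia.
case=> cs.
- case: (card2E cs) => u [w [uw es]]; subst s.
  pose phi (t : {fset V}) := if w \notin t then Vm u else Vm w.
  have hl := edge_l uw hs.
  exists phi; split.
  + move=> c.
    have -> : Tdef [fset u; w] c = count (fun t => phi t == c) [:: [fset u]; [fset w]].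
      rewrite Tnv ?cs ?cardfs2 ?uw // sum2 //= /phi.
      by rewrite !inE eqxx /= (eq_sym w u) (negbTE uw) /= addn0.
    apply: has_card_filter => //=.
    by rewrite !inE (inj_eq (@fset1_inj V)) uw.
  + move=> t /hl; rewrite !inE => /orP[]/eqP ->; rewrite /phi !inE ?eqxx /=.
    * rewrite eq_sym (negbTE uw) /= Tvert eqxx mul1n.
      by have [_ h _] := LvP u; apply: leq_trans h.
    * rewrite Tvert eqxx mul1n.
      by have [_ h _] := LvP w; apply: leq_trans h.
- case: (card3E cs) => a [b [d [a1 bd es]]].
  have [ab ad] : a != b /\ a != d.
    by move: a1; rewrite !inE negb_or => /andP[].
  have [sa sb sd] : [/\ a \in s, b \in s & d \in s].
    by rewrite es !inE !eqxx ?orbT.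
  pose phi (t : {fset V}) :=
    if a \notin t then Vm b else if b \notin t then Vm d else Vm a.
  pose l := [:: s `\ a; s `\ b; s `\ d].
  have hl : forall t, t \in l <-> prec S t s.
    move=> t; split.
    * rewrite !inE => /orP[/eqP ->|/orP[]/eqP ->]; exact: prec_compl.
    * case/prec_inv => z; rewrite {1}es !inE => /orP[/eqP -> ->|/orP[]/eqP -> ->];
        by rewrite !eqxx ?orbT.
  have pa : phi (s `\ a) = Vm b by rewrite /phi in_fsetD1 eqxx.
  have pb : phi (s `\ b) = Vm d by rewrite /phi !in_fsetD1 eqxx ab sa.
  have pd : phi (s `\ d) = Vm a.
    by rewrite /phi !in_fsetD1 ad sa bd sb.
  have c2' z : z \in s -> #|` s `\ z| != 1.
    by move=> zs; move: (cardfsD1 z s); rewrite zs cs add1n => -[<-].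
  exists phi; split.
  + move=> c.
    have -> : Tdef s c = count (fun t => phi t == c) l.
      rewrite Tnv ?cs // es sum3 // /= pa pb pd.
      by case: (Vm a == c); case: (Vm b == c); case: (Vm d == c).
    apply: has_card_filter => //=.
    rewrite !inE !negb_or !Dneq //; by rewrite eq_sym.
  + move=> t /hl; rewrite !inE => /orP[/eqP ->|/orP[]/eqP ->];
      rewrite ?pa ?pb ?pd Tnv ?c2' //; apply: sum_pos;
      rewrite in_fsetD1 ?sa ?sb ?sd ?andbT // eq_sym //.
Qed.


Lemma cnt_const (T : eqType) (b : bool) (l : seq T) : count (fun _ => b) l = b * size l.
Proof. by case: b; elim: l => [|x l IH] /=; rewrite ?IH ?muln0 ?mul1n ?mul0n. Qed.

Lemma prec_up r t : #|` r| = 2 -> is_simplex S r -> (prec S r t <-> face S t /\ r `<=` t).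
Proof.
move=> cr hr; split.
- case=> _ ht rt ct; split => //; apply: simplex3_face => //; by rewrite ct cr.
- case=> ft rt; split => //; first exact: face_simplex.
  by rewrite (face_card ft) cr.
Qed.

Lemma Tup : upwards_coherent S Tdef.
Proof.
move=> r hr c2.
have /andP[c1 _] := simplex_card hr.
have : #|`r| = 1 \/ #|`r| = 2 by lia.
case=> cs.
- have /cardfs1P [v er] : #|` r| == 1 by rewrite cs.
  subst r; have [ul hl] := edgesP v.
  exists (fun _ => Vm v); split.
  + move=> c.
    have -> : Tdef [fset v] c = count (fun t => Vm v == c) (edges v).
      by rewrite Tvert cnt_const size_map.
    by apply: has_card_filter.
  + move=> t ht; have [_ _ vt ct] := ht.
    rewrite fsub1set in vt; rewrite cardfs1 in ct.
    by rewrite Tnv ?ct // sum_pos.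
- case: (card2E cs) => u [w [uw er]].
  have ex : exists f, face S f /\ r `<=` f by case: hr.
  case: (edge_two_faces cs ex) => l [ul sl ml].
  case: l ul sl ml => [|f1 [|f2 [|]]] // ul _ ml.
  have hl t : t \in [:: f1; f2] <-> prec S r t.
    by rewrite prec_up //; apply: ml.
  have f21 : (f2 == f1) = false.
    by move: ul; rewrite /= !inE andbT eq_sym => /negbTE.
  pose phi (t : {fset V}) := if t == f1 then Vm u else Vm w.
  exists phi; split.
  + move=> c.
    have -> : Tdef r c = count (fun t => phi t == c) [:: f1; f2].
      by rewrite Tnv ?cs // er sum2 //= /phi eqxx f21 addn0.
    exact: has_card_filter.
  + move=> t /[dup] /(prec_up _ cs hr) [ft rt] _.
    rewrite Tnv ?(face_card ft) // /phi.
    by case: (t == f1); apply: sum_pos; apply: (fsubsetP rt); rewrite er !inE eqxx ?orbT.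
Qed.

Lemma Tgen : vertex_generated S Vm Tdef.
Proof.
have under v : underlying (Tdef [fset v]) = [set Vm v].
  apply/setP => c; rewrite !inE Tvert eq_sym.
  case: (c == Vm v); rewrite ?mul1n ?mul0n //.
  by have [_ h _] := LvP v; apply: leq_trans h.
split.
- by split; [exact: Tdown | exact: Tup].
- by move=> v; rewrite under cards1.
- exact: under.
- by move=> f hf c; rewrite Tnv // (face_card hf).
Qed.

End S.

Theorem mainTheorem2 (V : choiceType) (S : tri_surface V) (Vm : V -> pitch) :
  exists T : {fset V} -> mset12,
    vertex_generated S Vm T /\
    forall T' : {fset V} -> mset12, vertex_generated S Vm T' ->
      forall s, is_simplex S s -> T' s = T s.
Proof.
exists (Tdef S Vm); split; first exact: Tgen.
move=> T' [[dc uc] _ ud hf'] s hs.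
have vpos v c : (0 < T' [fset v] c)%N -> c = Vm v.
  move=> h; have : c \in underlying (T' [fset v]) by rewrite inE.
  by rewrite ud in_set1 => /eqP.
have /andP[c1 c3] := simplex_card hs.
have : #|`s| = 1 \/ #|`s| = 2 \/ #|`s| = 3 by lia.
case=> [cs|[cs|cs]].
- have /cardfs1P [v es] : #|` s| == 1 by rewrite cs.
  subst s.
  have [phi [hb hpos]] : _ := uc _ hs ltac:(by rewrite cs).
  have [ul hl] := edgesP S v.
  have ht t : prec S [fset v] t -> phi t = Vm v.
    move=> pt; apply: vpos.
    exact: (has_card_pos (hb (phi t)) (conj pt erefl)).
  apply/ffunP => c; rewrite Tvert.
  case: (eqVneq (Vm v) c) => [<-|ne].
  + rewrite ?eqxx mul1n.
    have hl' t : t \in edges S v <-> prec S [fset v] t by apply: hl.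
    rewrite (has_card_uniq (hb (Vm v)) (has_card_filter phi (Vm v) ul hl')).
    rewrite (@eq_in_count _ _ (fun _ => true)) ?cnt_const ?size_map ?mul1n //.
    by move=> t /hl /ht ->; rewrite eqxx.
  + rewrite ?(negbTE ne) mul0n; apply/eqP; rewrite -leqn0 leqNgt; apply/negP.
    by move/vpos => e; rewrite e eqxx in ne.
- case: (card2E cs) => u [w [uw es]]; subst s.
  have [phi [hb hpos]] : _ := dc _ hs ltac:(by rewrite cs).
  have hl := edge_l uw hs.
  have pu : phi [fset u] = Vm u.
    by apply: vpos; apply: hpos; apply/hl; rewrite !inE eqxx.
  have pw : phi [fset w] = Vm w.
    by apply: vpos; apply: hpos; apply/hl; rewrite !inE eqxx orbT.
  apply/ffunP => c.
  have ul : uniq [:: [fset u]; [fset w]].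
    by rewrite /= !inE (inj_eq (@fset1_inj V)) uw.
  rewrite (has_card_uniq (hb c) (has_card_filter phi c ul hl)).
  by rewrite Tnv ?cs // sum2 //= pu pw addn0.
- have fs := simplex3_face hs cs.
  by apply/ffunP => c; rewrite hf' // Tnv ?cs.
Qed.
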